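(* Let $X$ be a real Banach space and $T:X\rightrightarrows X^*$ maximal monotone. For any $h\in\mathcal{F}_T$, $$\mathrm{cl}\,P_1D(h)=\mathrm{cl}\,\mathrm{conv}\,D(T),\qquad\mathrm{cl}_{w*}P_2D(h)=\mathrm{cl}_{w*}\mathrm{conv}\,R(T).$$
   Context: An operator $T:X\rightrightarrows X^*$ is a subset of $X\times X^*$ with $D(T)=P_1T$, $R(T)=P_2T$, where $P_1,P_2$ are the canonical projections onto $X$ and $X^*$. $T$ is monotone if $\langle x-y,x^*-y^*\rangle\geq0$ for all $(x,x^* ),(y,y^* )\in T$, and maximal monotone if it is monotone and not properly contained in another monotone operator. $\mathcal{F}_T$ is the set of all convex lower semicontinuous $h:X\times X^*\to\mathbb{R}\cup\{\pm\infty\}$ with $h(x,x^* )\geq\langle x,x^*\rangle$ for all $(x,x^* )$ and $h(x,x^* )=\langle x,x^*\rangle$ on $T$. $D(h)=\{z\;|\;h(z)<\infty\}$. $\mathrm{cl}$ is norm closure in $X$, $\mathrm{cl}_{w*}$ weak-$*$ closure in $X^*$, $\mathrm{conv}$ convex hull. *)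

(* Defs.v *)
From HB Require Import structures.
From mathcomp Require Import all_boot all_order all_algebra.
From mathcomp Require Import all_classical all_reals all_analysis.
Set Implicit Arguments. Unset Strict Implicit. Unset Printing Implicit Defensive.
Import Order.TTheory GRing.Theory Num.Theory.
Import numFieldNormedType.Exports.
Local Open Scope classical_set_scope.
Local Open Scope ring_scope.

Section Defs.
Variables (R : realType) (X : normedModType R).

(* The topological dual X^*: elements are represented as functions X -> R
   that are linear and (norm-)continuous. The duality pairing <x, f> is f x. *)
Definition is_dual (f : X -> R) : Prop :=
  (forall (a : R) (x y : X), f (a *: x + y) = a * f x + f y) /\ continuous f.

(* ||f - g||_{X^*} < d  (operator norm), unfolded:
   there is d' < d with |f x - g x| <= d' ||x|| for all x. *)
Definition dual_dist_lt (f g : X -> R) (d : R) : Prop :=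
  exists d' : R, d' < d /\ forall x : X, `|f x - g x| <= d' * `|x|.

Definition operator := X -> (X -> R) -> Prop.

Definition is_operator (T : operator) : Prop :=
  forall x f, T x f -> is_dual f.

Definition monotone (T : operator) : Prop :=
  forall x f y g, T x f -> T y g -> 0 <= f (x - y) - g (x - y).

Definition maximal_monotone (T : operator) : Prop :=
  is_operator T /\ monotone T /\
  forall S : operator, is_operator S -> monotone S ->
    (forall x f, T x f -> S x f) -> forall x f, S x f -> T x f.

Definition dom_op (T : operator) : set X := [set x | exists f, T x f].
Definition range_op (T : operator) : set (X -> R) := [set f | exists x, T x f].

(* h : X x X^* -> R u {+oo,-oo}, convex (epigraph definition). *)
Definition convex_on_XXs (h : X -> (X -> R) -> \bar R) : Prop :=
  forall x1 f1 x2 f2 (a1 a2 t : R),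
    is_dual f1 -> is_dual f2 -> 0 <= t -> t <= 1 ->
    (h x1 f1 <= a1%:E)%E -> (h x2 f2 <= a2%:E)%E ->
    (h (t *: x1 + (1 - t) *: x2)%R (fun y => t * f1 y + (1 - t) * f2 y)%R
       <= (t * a1 + (1 - t) * a2)%R%:E)%E.

Definition lsc_on_XXs (h : X -> (X -> R) -> \bar R) : Prop :=
  forall x f (a : R), is_dual f -> (a%:E < h x f)%E ->
    exists2 d : R, 0 < d & forall y g, is_dual g ->
      `|y - x| < d -> dual_dist_lt g f d -> (a%:E < h y g)%E.

Definition fitzpatrick_family (T : operator) (h : X -> (X -> R) -> \bar R) :
  Prop :=
  convex_on_XXs h /\ lsc_on_XXs h /\
  (forall x f, is_dual f -> ((f x)%:E <= h x f)%E) /\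
  (forall x f, T x f -> h x f = (f x)%:E).

Definition P1_dom (h : X -> (X -> R) -> \bar R) : set X :=
  [set x | exists f, is_dual f /\ (h x f < +oo)%E].
Definition P2_dom (h : X -> (X -> R) -> \bar R) : set (X -> R) :=
  [set f | is_dual f /\ exists x, (h x f < +oo)%E].

Definition conv_hull (A : set X) : set X :=
  [set x | exists n (w : 'I_n -> R) (p : 'I_n -> X),
     (forall i, 0 <= w i) /\ \sum_i w i = 1 /\ (forall i, A (p i)) /\
     x = \sum_i w i *: p i].

Definition conv_hull_dual (B : set (X -> R)) : set (X -> R) :=
  [set f | exists n (w : 'I_n -> R) (g : 'I_n -> (X -> R)),
     (forall i, 0 <= w i) /\ \sum_i w i = 1 /\ (forall i, B (g i)) /\
     forall y, f y = \sum_i w i * g i y].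

(* weak-* closure in X^*: f in X^* such that every basic weak-* neighbourhood
   {g | |g x_k - f x_k| < e, k < n} meets B *)
Definition wstar_closure (B : set (X -> R)) : set (X -> R) :=
  [set f | is_dual f /\
     forall n (xs : 'I_n -> X) (e : R), 0 < e ->
       exists g, B g /\ forall k, `|g (xs k) - f (xs k)| < e].

End Defs.

(* Main.v *)
Require Import Defs.
From HB Require Import structures.
From mathcomp Require Import all_boot all_order all_algebra.
From mathcomp Require Import all_classical all_reals all_analysis.
From Stdlib Require Import ClassicalEpsilon.
From mathcomp.algebra_tactics Require Import ring lra.
Import Order.TTheory GRing.Theory Num.Theory.
Import numFieldNormedType.Exports.
Local Open Scope classical_set_scope.
Local Open Scope ring_scope.
Set Implicit Arguments. Unset Strict Implicit. Unset Printing Implicit Defensive.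

Definition cvxfun (R : realType) (V : lmodType R) (G : V -> R) :=
  forall (t : R) a b, 0 <= t -> t <= 1 ->
    G (t *: a + (1 - t) *: b) <= t * G a + (1 - t) * G b.

Definition goodp (R : realType) (V : lmodType R) (G : V -> R)
  (p : set V * (V -> R)) :=
  p.1 0 /\ (forall (a : R) x y, p.1 x -> p.1 y -> p.1 (a *: x + y)) /\
  (forall (a : R) x y, p.1 x -> p.1 y -> p.2 (a *: x + y) = a * p.2 x + p.2 y) /\
  (forall x, p.1 x -> p.2 x <= G x).

Lemma goodp_lin (R : realType) (V : lmodType R) (G : V -> R) L f :
  goodp G (L, f) ->
  f 0 = 0 /\ (forall x y, L x -> L y -> f (x + y) = f x + f y) /\
  (forall (a : R) x, L x -> f (a *: x) = a * f x) /\
  (forall x y, L x -> L y -> L (x + y)) /\ (forall (a : R) x, L x -> L (a *: x)).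
Proof.
move=> [/= L0 [LS [fl _]]].
have f0 : f 0 = 0.
  have := fl 1 0 0 L0 L0; rewrite scale1r addr0 mul1r => /eqP.
  by rewrite -subr_eq0 opprD addrA subrr sub0r oppr_eq0 => /eqP.
split=> //; split; first by move=> x y Lx Ly; have := fl 1 x y Lx Ly; rewrite scale1r mul1r.
split; first by move=> a x Lx; have := fl a x 0 Lx L0; rewrite addr0 f0 addr0.
split; first by move=> x y Lx Ly; have := LS 1 x y Lx Ly; rewrite scale1r.
by move=> a x Lx; have := LS a x 0 Lx L0; rewrite addr0.
Qed.

Lemma ext_step (R : realType) (V : lmodType R) (G : V -> R) (L : set V) f :
  cvxfun G -> goodp G (L, f) -> forall v, ~ L v ->
  exists f', goodp G ([set x | exists z c, L z /\ x = z + c *: v], f') /\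
    forall x, L x -> f' x = f x.
Proof.
move=> cG gf v Lv.
have [f0 [fD [fZ [LD LZ]]]] := goodp_lin gf.
have [L0 [_ [_ fG0]]] := gf.
have fG : forall x, L x -> f x <= G x := fG0.
have LB : forall x y, L x -> L y -> L (x - y).
  by move=> x y Lx Ly; rewrite -scaleN1r; apply: LD => //; apply: LZ.
pose A := [set y | exists z t, L z /\ 0 < t /\ y = (f z - G (z - t *: v)) / t].
pose B := [set y | exists z s, L z /\ 0 < s /\ y = (G (z + s *: v) - f z) / s].
have key : forall a b, A a -> B b -> a <= b.
  move=> _ _ [z2 [t [Lz2 [t0 ->]]]] [z1 [s [Lz1 [s0 ->]]]].
  rewrite ler_pdivrMr // mulrAC ler_pdivlMr //.
  pose l := s / (s + t).
  have st0 : 0 < s + t by rewrite addr_gt0.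
  have l0 : 0 <= l by rewrite divr_ge0 // ltW.
  have l1 : l <= 1 by rewrite ler_pdivrMr // mul1r lerDl ltW.
  have hl : 1 - l = t / (s + t).
    by rewrite /l; field; rewrite gt_eqF.
  pose w := l *: z2 + (1 - l) *: z1.
  have Lw : L w by apply: LD; apply: LZ.
  have fw : f w = l * f z2 + (1 - l) * f z1 by rewrite /w fD ?fZ //; apply: LZ.
  have ew : w = l *: (z2 - t *: v) + (1 - l) *: (z1 + s *: v).
    have q : (1 - l) * s = l * t by rewrite hl /l; field; rewrite gt_eqF.
    rewrite /w scalerDr scalerDr scalerN !scalerA q.
    by rewrite addrACA addNr addr0.
  have := fG w Lw; rewrite fw ew => h1.
  have := le_trans h1 (cG l _ _ l0 l1) => h2.
  have hs : l * (s + t) = s by rewrite /l mulfVK // gt_eqF.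
  have ht : (1 - l) * (s + t) = t by rewrite hl mulfVK // gt_eqF.
  have h3 := ler_wpM2r (ltW st0) h2.
  have E : forall a b, (l * a + (1 - l) * b) * (s + t) = (l * (s + t)) * a + ((1 - l) * (s + t)) * b.
    by move=> a b; ring.
  rewrite !E hs ht in h3.
  rewrite mulrBl mulrBl !(mulrC _ s) !(mulrC _ t).
  by rewrite lerBlDr addrAC lerBrDr addrC.
have A0 : A !=set0.
  by exists ((f 0 - G (0 - 1 *: v)) / 1); exists 0, 1; split => //; split.
have B0 : B !=set0.
  by exists ((G (0 + 1 *: v) - f 0) / 1); exists 0, 1; split => //; split.
have hubA : has_ubound A.
  by case: B0 => b Bb; exists b => a Aa; apply: key.
pose al := sup A.
have alA : forall a, A a -> a <= al := ub_le_sup hubA.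
have alB : forall b, B b -> al <= b.
  by move=> b Bb; apply: ge_sup A0 _ => a Aa; exact: key.
have uniq : forall z c z' c', L z -> L z' -> z + c *: v = z' + c' *: v ->
    z = z' /\ c = c'.
  move=> z c z' c' Lz Lz' e.
  have e2 : c *: v - c' *: v = z' - z.
    by apply/eqP; rewrite subr_eq addrAC -e addrAC subrr add0r.
  have ec : c = c'.
    case: (eqVneq c c') => // ne; exfalso; apply: Lv.
    have -> : v = (c - c')^-1 *: (z' - z).
      by rewrite -e2 -scalerBl scalerA mulVf ?scale1r // subr_eq0.
    by apply: LZ; apply: LB.
  by split => //; subst c'; apply: (addIr (c *: v)).
pose P x := fun p : V * R => L p.1 /\ x = p.1 + p.2 *: v.
pose pk x := epsilon (inhabits ((0 : V), (0 : R))) (P x).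
pose f' x := f (pk x).1 + (pk x).2 * al.
have f'E : forall z c, L z -> f' (z + c *: v) = f z + c * al.
  move=> z c Lz.
  have := epsilon_spec (inhabits ((0 : V), (0 : R))) (P (z + c *: v))
     (ex_intro _ (z, c) (conj Lz erefl)).
  rewrite -/(pk _) => -[Lp e].
  by case: (uniq _ _ _ _ Lz Lp e) => e1 e2; rewrite /f' -e1 -e2.
exists f'; split; last first.
  by move=> x Lx; have := f'E x 0 Lx; rewrite scale0r addr0 mul0r addr0.
split; first by exists 0, 0; rewrite scale0r addr0.
split.
  move=> a _ _ /= [z1 [c1 [Lz1 ->]]] [z2 [c2 [Lz2 ->]]].
  exists (a *: z1 + z2), (a * c1 + c2); split; first by apply: LD => //; apply: LZ.
  by rewrite scalerDr scalerA scalerDl addrACA.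
split.
  move=> a _ _ /= [z1 [c1 [Lz1 ->]]] [z2 [c2 [Lz2 ->]]].
  have -> : a *: (z1 + c1 *: v) + (z2 + c2 *: v) = (a *: z1 + z2) + (a * c1 + c2) *: v.
    by rewrite scalerDr scalerA scalerDl addrACA.
  rewrite !f'E //; last by apply: LD => //; apply: LZ.
  rewrite fD ?fZ //; last by apply: LZ.
  ring.
move=> _ /= [z [c [Lz ->]]]; rewrite f'E //.
case: (ltgtP c 0) => hc.
- have hA : A ((f z - G (z - (- c) *: v)) / (- c)).
    by exists z, (- c); split => //; split => //; rewrite oppr_gt0.
  have := alA _ hA; rewrite scaleNr opprK ler_pdivrMr ?oppr_gt0 //.
  rewrite mulrN (mulrC al) => h; lra.
- have hB : B ((G (z + c *: v) - f z) / c) by exists z, c.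
  have := alB _ hB; rewrite ler_pdivlMr // (mulrC al) => h; lra.
- by rewrite hc scale0r addr0 mul0r addr0; apply: fG.
Qed.

Lemma HB_convex (R : realType) (V : lmodType R) (G : V -> R) :
  cvxfun G -> G 0 = 0 ->
  exists l : V -> R, (forall (a : R) x y, l (a *: x + y) = a * l x + l y) /\
    forall x, l x <= G x.
Proof.
move=> cG G0.
pose T := {p : set V * (V -> R) | goodp G p}.
pose le (a b : T) := (sval a).1 `<=` (sval b).1 /\
  forall x, (sval a).1 x -> (sval b).2 x = (sval a).2 x.
pose Rl (a b : T) := `[< le a b >].
have g0 : goodp G ([set 0], fun _ => 0).
  split; first by [].
  split; first by move=> a x y /= -> ->; rewrite scaler0 addr0.
  split; first by move=> a x y /= _ _; rewrite mulr0 addr0.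
  by move=> x /= ->; rewrite G0.
pose t0 : T := exist _ _ g0.
have [| | |t tmax] := @ZL_preorder T t0 Rl.
- by move=> a; apply/asboolP; split.
- move=> a b c /asboolP [ab1 ab2] /asboolP [bc1 bc2]; apply/asboolP; split.
    by move=> x /ab1 /bc1.
  by move=> x ax; rewrite bc2 ?ab2 //; apply: ab1.
- move=> A Atot.
  case: (pselect (exists s, A s)) => [[s0 As0]|nA]; last first.
    by exists t0 => s As; exfalso; apply: nA; exists s.
  have comp : forall s1 s2, A s1 -> A s2 -> le s1 s2 \/ le s2 s1.
    by move=> s1 s2 A1 A2; case: (Atot _ _ A1 A2) => /asboolP; [left|right].
  pose L := [set x | exists s, A s /\ (sval s).1 x].
  pose pk x := epsilon (inhabits s0) (fun s => A s /\ (sval s).1 x).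
  pose f x := (sval (pk x)).2 x.
  have fE : forall s x, A s -> (sval s).1 x -> f x = (sval s).2 x.
    move=> s x As sx.
    have [Ap px] := epsilon_spec (inhabits s0) (fun s => A s /\ (sval s).1 x)
      (ex_intro _ s (conj As sx)).
    rewrite /f -/(pk x).
    case: (comp _ _ As Ap) => -[h1 h2]; first by rewrite h2.
    by rewrite h2.
  have two : forall s1 s2 x y, A s1 -> A s2 -> (sval s1).1 x -> (sval s2).1 y ->
      exists s, A s /\ (sval s).1 x /\ (sval s).1 y.
    move=> s1 s2 x y A1 A2 x1 y2.
    case: (comp _ _ A1 A2) => -[h1 _].
      by exists s2; split => //; split => //; apply: h1.
    by exists s1; split => //; split => //; apply: h1.
  have gL : goodp G (L, f).
    split; first by exists s0; split => //; case: (svalP s0).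
    split.
      move=> a x y /= [s1 [A1 x1]] [s2 [A2 y2]].
      have [s [As [xs ys]]] := two _ _ _ _ A1 A2 x1 y2.
      exists s; split => //; have [_ [hS _]] := svalP s; exact: hS.
    split.
      move=> a x y /= [s1 [A1 x1]] [s2 [A2 y2]].
      have [s [As [xs ys]]] := two _ _ _ _ A1 A2 x1 y2.
      have [_ [hS [hL _]]] := svalP s.
      by rewrite !(fE s) //; [apply: hL | apply: hS].
    move=> x /= [s [As xs]]; rewrite (fE s) //.
    by have [_ [_ [_ hG]]] := svalP s; apply: hG.
  exists (exist _ _ gL) => s As; apply/asboolP; split.
    by move=> x xs; exists s.
  by move=> x xs /=; rewrite (fE s).
have full : forall x, (sval t).1 x.
  move=> v; apply: contrapT => nv.
  case: t tmax nv => [[L f] gt] tmax /= nv.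
  have [f' [gf' ef']] := ext_step cG gt nv.
  have Rts : Rl (exist _ _ gt) (exist _ _ gf').
    apply/asboolP; split => /=.
      by move=> x Lx; exists x, 0; rewrite scale0r addr0.
    by move=> x Lx; rewrite ef'.
  have /asboolP [h _] := tmax _ Rts; apply: nv; apply: h => /=.
  by exists 0, 1; rewrite scale1r add0r; split => //; case: (gt).
exists (sval t).2; have [_ [_ [hL hG]]] := svalP t.
by split => [a x y|x]; [apply: hL | apply: hG].
Qed.

Lemma separation (R : realType) (V : lmodType R) (N : V -> R) (C : set V)
    (p : V) (r : R) :
  (forall a, 0 <= N a) ->
  (forall a b, N (a + b) <= N a + N b) ->
  (forall (t : R) a, 0 <= t -> N (t *: a) = t * N a) ->
  (forall (t : R) a b, 0 <= t -> t <= 1 -> C a -> C b -> C (t *: a + (1 - t) *: b)) ->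
  0 < r -> (forall c, C c -> r <= N (p - c)) ->
  exists l : V -> R, (forall (a : R) x y, l (a *: x + y) = a * l x + l y) /\
    (forall z, l z <= N z) /\ (forall c, C c -> l c + r <= l p).
Proof.
move=> N0 ND NZ cC r0 hr.
case: (pselect (exists c, C c)) => [[c0 Cc0]|nC]; last first.
  exists (fun _ => 0); split; first by move=> *; rewrite mulr0 addr0.
  by split => // c Cc; exfalso; apply: nC; exists c.
have Nz : N 0 = 0 by rewrite -(scale0r 0) NZ // mul0r.
pose E x := [set N (x - c) | c in C].
pose d x := inf (E x).
have En : forall x, E x !=set0 by move=> x; exists (N (x - c0)), c0.
have Eb : forall x, has_lbound (E x) by move=> x; exists 0 => _ [c _ <-].
have dle : forall x c, C c -> d x <= N (x - c).
  by move=> x c Cc; apply: (ge_inf (Eb x)); exists c.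
have dge : forall x y, (forall c, C c -> y <= N (x - c)) -> y <= d x.
  by move=> x y h; apply: lb_le_inf (En x) _ => _ [c Cc <-]; apply: h.
have dcvx : cvxfun d.
  move=> t a b t0 t1; apply/ler_addgt0Pr => e e0.
  have [_ [c1 C1 <-] h1] := inf_adherent e0 (conj (En a) (Eb a)).
  have [_ [c2 C2 <-] h2] := inf_adherent e0 (conj (En b) (Eb b)).
  have t1' : 0 <= 1 - t by rewrite subr_ge0.
  apply: le_trans (dle _ _ (cC t c1 c2 t0 t1 C1 C2)) _.
  have -> : t *: a + (1 - t) *: b - (t *: c1 + (1 - t) *: c2) =
            t *: (a - c1) + (1 - t) *: (b - c2).
    by rewrite !scalerBr opprD addrACA.
  apply: le_trans (ND _ _) _; rewrite !NZ //.
  rewrite -/(d a) -/(d b) in h1 h2.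
  have := ler_wpM2l t0 (ltW h1); have := ler_wpM2l t1' (ltW h2).
  move=> k2 k1.
  have -> : t * d a + (1 - t) * d b + e = t * (d a + e) + (1 - t) * (d b + e).
    by ring.
  exact: lerD.
pose G z := d (p + z) - d p.
have G0 : G 0 = 0 by rewrite /G addr0 subrr.
have cG : cvxfun G.
  move=> t a b t0 t1; rewrite /G.
  have -> : p + (t *: a + (1 - t) *: b) = t *: (p + a) + (1 - t) *: (p + b).
    by rewrite !scalerDr addrACA -scalerDl subrKC scale1r.
  have := dcvx t (p + a) (p + b) t0 t1.
  move=> h.
  have -> : t * (d (p + a) - d p) + (1 - t) * (d (p + b) - d p) =
     t * d (p + a) + (1 - t) * d (p + b) - d p by ring.
  by rewrite lerD2r.
have [l [hl lG]] := HB_convex cG G0.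
exists l; split => //; split.
  move=> z; apply: le_trans (lG z) _; rewrite /G lerBlDl.
  rewrite -lerBlDr; apply: dge => c Cc.
  rewrite lerBlDr; apply: le_trans (dle _ _ Cc) _.
  have -> : p + z - c = (p - c) + z by rewrite addrAC.
  exact: ND.
move=> c Cc.
have lB : forall x y, l (x - y) = l x - l y.
  move=> x y; have := hl (-1) y x; rewrite scaleN1r mulN1r addrC => ->.
  by rewrite addrC.
  have := lG (c - p); rewrite lB /G.
  rewrite (_ : p + (c - p) = c); last by rewrite addrC subrK.
have dc : d c <= 0 by have := dle c c Cc; rewrite subrr Nz.
have dp : r <= d p by apply: dge.
move=> h; lra.
Qed.

Definition hullV (R : realType) (V : lmodType R) (A : set V) : set V :=
  [set x | exists n (w : 'I_n -> R) (p : 'I_n -> V),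
     (forall i, 0 <= w i) /\ \sum_i w i = 1 /\ (forall i, A (p i)) /\
     x = \sum_i w i *: p i].

Lemma hullV1 (R : realType) (V : lmodType R) (A : set V) x : A x -> hullV A x.
Proof.
move=> Ax; exists 1, (fun _ => 1), (fun _ => x); split => //; split.
  by rewrite big_ord1.
by split => //; rewrite big_ord1 scale1r.
Qed.

Lemma sum_split (R : realType) (V : lmodType R) n1 n2 (F : 'I_(n1 + n2) -> V) :
  \sum_i F i = \sum_i F (lshift n2 i) + \sum_i F (rshift n1 i).
Proof. exact: big_split_ord. Qed.

Lemma sum_splitR (R : realType) n1 n2 (F : 'I_(n1 + n2) -> R) :
  \sum_i F i = \sum_i F (lshift n2 i) + \sum_i F (rshift n1 i).
Proof. exact: big_split_ord. Qed.

Lemma hullV_cvx (R : realType) (V : lmodType R) (A : set V) (t : R) a b :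
  0 <= t -> t <= 1 -> hullV A a -> hullV A b -> hullV A (t *: a + (1 - t) *: b).
Proof.
move=> t0 t1 [n1 [w1 [p1 [w10 [w11 [Ap1 ->]]]]]] [n2 [w2 [p2 [w20 [w21 [Ap2 ->]]]]]].
have t1' : 0 <= 1 - t by rewrite subr_ge0.
pose w (i : 'I_(n1 + n2)) := match fintype.split i with inl j => t * w1 j | inr j => (1 - t) * w2 j end.
pose p (i : 'I_(n1 + n2)) := match fintype.split i with inl j => p1 j | inr j => p2 j end.
have sl : forall j, fintype.split (lshift n2 j) = inl j := fun j => unsplitK (inl j).
have sr : forall j, fintype.split (rshift n1 j) = inr j := fun j => unsplitK (inr j).
exists (n1 + n2), w, p; split.
  by move=> i; rewrite /w; case: (fintype.split i) => j; apply: mulr_ge0.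
split.
  rewrite sum_splitR /w.
  under eq_bigr do rewrite sl.
  under [in X in _ + X]eq_bigr do rewrite sr.
  by rewrite -!mulr_sumr w11 w21 !mulr1 subrKC.
split; first by move=> i; rewrite /p; case: (fintype.split i).
rewrite sum_split /w /p; apply/esym.
under eq_bigr do rewrite sl.
under [in X in _ + X]eq_bigr do rewrite sr.
by rewrite !scaler_sumr; congr (_ + _); apply: eq_bigr => i _; rewrite scalerA.
Qed.

Lemma lin_sum (R : realType) (V : lmodType R) (l : V -> R) n (c : 'I_n -> R)
    (v : 'I_n -> V) :
  (forall (a : R) x y, l (a *: x + y) = a * l x + l y) ->
  l (\sum_i c i *: v i) = \sum_i c i * l (v i).
Proof.
move=> hl.
have l0 : l 0 = 0.
  have := hl 1 0 0; rewrite scale1r addr0 mul1r => /eqP.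
  by rewrite -subr_eq0 opprD addrA subrr sub0r oppr_eq0 => /eqP.
elim: n c v => [|n IH] c v; first by rewrite !big_ord0.
by rewrite !big_ord_recr /= addrC hl IH addrC.
Qed.

Lemma dual_lin (R : realType) (X : normedModType R) (f : X -> R) :
  is_dual f ->
  f 0 = 0 /\ (forall x y, f (x + y) = f x + f y) /\
  (forall (a : R) x, f (a *: x) = a * f x) /\ (forall x y, f (x - y) = f x - f y).
Proof.
move=> [hl _].
have f0 : f 0 = 0.
  have := hl 1 0 0; rewrite scale1r addr0 mul1r => /eqP.
  by rewrite -subr_eq0 opprD addrA subrr sub0r oppr_eq0 => /eqP.
have fD : forall x y, f (x + y) = f x + f y.
  by move=> x y; have := hl 1 x y; rewrite scale1r mul1r.
have fZ : forall (a : R) x, f (a *: x) = a * f x.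
  by move=> a x; have := hl a x 0; rewrite addr0 f0 addr0.
split => //; split => //; split => // x y.
by rewrite fD -scaleN1r fZ mulN1r.
Qed.

Lemma dual_comb (R : realType) (X : normedModType R) (f g : X -> R) (a b : R) :
  is_dual f -> is_dual g -> is_dual (fun y => a * f y + b * g y).
Proof.
move=> hf hg; have [_ [fD [fZ _]]] := dual_lin hf; have [_ [gD [gZ _]]] := dual_lin hg.
split.
  by move=> c x y; rewrite fD gD fZ gZ; ring.
move=> x.
apply: (continuousD (f := fun y => a * f y) (g := fun y => b * g y)).
  by apply: (continuousM (s := fun _ => a) (t := f)); [exact: cst_continuous | exact: hf.2].
by apply: (continuousM (s := fun _ => b) (t := g)); [exact: cst_continuous | exact: hg.2].
Qed.

Lemma lip_cont (R : realType) (X : normedModType R) (l : X -> R) :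
  (forall x y, `|l x - l y| <= `|x - y|) -> continuous l.
Proof.
move=> hl x; apply/(@cvgrPdist_lt _ _ _ (nbhs x)) => e e0.
near=> z; apply: le_lt_trans (hl x z) _.
near: z; apply: cvgr_dist_lt => //.
Unshelve. all: by end_near. Qed.

Lemma extend_T (R : realType) (X : normedModType R) (T : operator X) x0 k :
  maximal_monotone T -> is_dual k ->
  (forall y g, T y g -> 0 <= k (x0 - y) - g (x0 - y)) -> T x0 k.
Proof.
move=> [opT [monT maxT]] dk hk.
pose S := fun x f => T x f \/ (x = x0 /\ f = k).
have opS : is_operator S.
  by move=> x f [Txf|[_ ->]] //; apply: opT Txf.
have monS : Defs.monotone S.
  move=> x f y g [Txf|[-> ->]] [Tyg|[-> ->]].
  - exact: monT.
  - have := hk _ _ Txf; have [_ [_ [_ kB]]] := dual_lin dk.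
    have [_ [_ [_ fB]]] := dual_lin (opT _ _ Txf).
    by rewrite !kB !fB => h; lra.
  - exact: hk.
  - by rewrite subrr.
by apply: (maxT S opS monS) => //; [move=> x f Txf; left | right].
Qed.

Lemma fitz_bound (R : realType) (X : normedModType R) (T : operator X)
    (h : X -> (X -> R) -> \bar R) x0 f0 (M : R) y g :
  is_operator T -> fitzpatrick_family T h -> is_dual f0 ->
  h x0 f0 = M%:E -> T y g -> g x0 + f0 y - g y <= M.
Proof.
move=> opT [cvx [_ [hge hT]]] df0 hM Tyg.
have dg := opT _ _ Tyg.
have [_ [fD [fZ fB]]] := dual_lin df0.
have [_ [gD [gZ gB]]] := dual_lin dg.
pose K := g x0 + f0 y - g y - M.
pose c := g x0 + f0 y - g y - f0 x0.
have key : forall t, 0 < t -> t <= 1 -> K <= t * c.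
  move=> t t0 t1.
  have hM' : (h x0 f0 <= M%:E)%E by rewrite hM.
  have hT' : (h y g <= (g y)%:E)%E by rewrite hT.
  have h1 := cvx x0 f0 y g M (g y) t df0 dg (ltW t0) t1 hM' hT'.
  have h2 := hge (t *: x0 + (1 - t) *: y) (fun z => t * f0 z + (1 - t) * g z)
    (dual_comb t (1 - t) df0 dg).
  have := le_trans h2 h1; rewrite lee_fin /= !fD !gD !fZ !gZ => h3.
  have h4 : t * (t * K - t * t * c) <= 0.
    rewrite /K /c; nra.
  rewrite -subr_ge0; have : 0 <= t * (t * c - K) by nra.
  by rewrite pmulr_rge0.
rewrite -subr_le0 -/K.
apply/ler_addgt0Pr => e e0; rewrite add0r.
pose t := e / (e + `|c| + 1).
have d0 : 0 < e + `|c| + 1 by rewrite -addrA; apply: addr_gt0 => //; apply: addr_ge0.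
have t0 : 0 < t by rewrite divr_gt0.
have t1 : t <= 1.
  by rewrite ler_pdivrMr // mul1r -addrA lerDl; apply: addr_ge0.
apply: le_trans (key t t0 t1) _.
apply: le_trans (ler_wpM2l (ltW t0) (ler_norm c)) _.
rewrite /t mulrAC ler_pdivrMr // ler_pM2l //.
have := normr_ge0 c; lra.
Qed.

Lemma conv_T (R : realType) (X : normedModType R) (T : operator X)
    (h : X -> (X -> R) -> \bar R) n (w : 'I_n -> R) (p : 'I_n -> X)
    (g : 'I_n -> (X -> R)) :
  is_operator T -> fitzpatrick_family T h ->
  (forall i, 0 <= w i) -> \sum_i w i = 1 -> (forall i, T (p i) (g i)) ->
  is_dual (fun y => \sum_i w i * g i y) /\
  (h (\sum_i w i *: p i)%R (fun y => \sum_i w i * g i y)%R <=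
    (\sum_i w i * g i (p i))%R%:E)%E.
Proof.
move=> opT hF; have [cvx [_ [hge hT]]] := hF.
elim: n w p g => [|n IH] w p g w0 w1 Tp.
  by move: w1; rewrite big_ord0 => /eqP; rewrite eq_sym oner_eq0.
pose w' i := w (lift ord0 i).
pose s := \sum_i w' i.
have s0 : 0 <= s by apply: sumr_ge0 => i _; apply: w0.
have hs : w ord0 = 1 - s by rewrite -w1 big_ord_recl addrK.
have dg0 := opT _ _ (Tp ord0).
have eF : forall y, \sum_(i < n.+1) w i * g i y = w ord0 * g ord0 y + \sum_i w' i * g (lift ord0 i) y.
  by move=> y; rewrite big_ord_recl.
have eX : \sum_(i < n.+1) w i *: p i = w ord0 *: p ord0 + \sum_i w' i *: p (lift ord0 i).
  by rewrite big_ord_recl.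
have eA : \sum_(i < n.+1) w i * g i (p i) = w ord0 * g ord0 (p ord0) + \sum_i w' i * g (lift ord0 i) (p (lift ord0 i)).
  by rewrite big_ord_recl.
case: (eqVneq s 0) => [sz|snz].
  have w'0 : forall i, w' i = 0.
    by move=> i; apply: (psumr_eq0P (fun i _ => w0 (lift ord0 i)) sz).
  have wo : w ord0 = 1 by rewrite hs sz subr0.
  have -> : (fun y => \sum_i w i * g i y) = g ord0.
    apply: funext => y; rewrite eF wo mul1r big1 ?addr0 // => i _.
    by rewrite w'0 mul0r.
  rewrite eX eA wo scale1r mul1r big1 ?addr0; last by move=> i _; rewrite w'0 scale0r.
  rewrite big1 ?addr0; last by move=> i _; rewrite w'0 mul0r.
  by split => //; rewrite hT.
have spos : 0 < s by rewrite lt_def snz.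
pose w'' i := w' i / s.
have sw'' : \sum_i w'' i = 1 by rewrite -mulr_suml divff.
have [dF hF'] := IH w'' (fun i => p (lift ord0 i)) (fun i => g (lift ord0 i))
  (fun i => divr_ge0 (w0 _) s0) sw'' (fun i => Tp (lift ord0 i)).
have e1 : 1 - w ord0 = s by rewrite hs; lra.
have kR : forall (d : 'I_n -> R), s * \sum_i w'' i * d i = \sum_i w' i * d i.
  move=> d; rewrite mulr_sumr; apply: eq_bigr => i _; rewrite /w''.
  by field.
have kX : s *: \sum_i w'' i *: p (lift ord0 i) = \sum_i w' i *: p (lift ord0 i).
  rewrite scaler_sumr; apply: eq_bigr => i _; rewrite scalerA /w''.
  by congr (_ *: _); field.
have eF2 : (fun y => \sum_i w i * g i y) =
    (fun y => w ord0 * g ord0 y + (1 - w ord0) *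
       (fun y => \sum_i w'' i * g (lift ord0 i) y) y).
  by apply: funext => y; rewrite eF /= e1 kR.
have dall : is_dual (fun y => \sum_i w i * g i y).
  by rewrite eF2; apply: dual_comb.
split => //.
rewrite eF2 eX eA.
have -> : \sum_i w' i *: p (lift ord0 i) = (1 - w ord0) *: \sum_i w'' i *: p (lift ord0 i).
  by rewrite e1 kX.
have -> : \sum_i w' i * g (lift ord0 i) (p (lift ord0 i)) =
   (1 - w ord0) * \sum_i w'' i * g (lift ord0 i) (p (lift ord0 i)).
  by rewrite e1 kR.
apply: cvx => //.
- by rewrite hs lerBlDr lerDl.
- by rewrite hT.
Qed.

Lemma h_fin (R : realType) (X : normedModType R) (T : operator X)
    (h : X -> (X -> R) -> \bar R) x f :
  fitzpatrick_family T h -> is_dual f -> (h x f < +oo)%E ->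
  exists M, h x f = M%:E.
Proof.
move=> [_ [_ [hge _]]] df hlt.
have := hge x f df; case E: (h x f) => [M| |] //.
- by move=> _; exists M.
- by rewrite E in hlt.
Qed.

Lemma part1 (R : realType) (X : normedModType R) (T : operator X)
    (h : X -> (X -> R) -> \bar R) :
  maximal_monotone T -> fitzpatrick_family T h ->
  P1_dom h `<=` closure (conv_hull (dom_op T)).
Proof.
move=> mT hF x0 [f0 [df0 hlt]].
have [opT _] := mT.
have [M hM] := h_fin hF df0 hlt.
have Mge : f0 x0 <= M.
  by have [_ [_ [hge _]]] := hF; have := hge x0 f0 df0; rewrite hM lee_fin.
apply: contrapT => ncl.
have [B [nB nCB]] : exists B, nbhs x0 B /\ ~ (conv_hull (dom_op T) `&` B !=set0).
  apply: contrapT => nex; apply: ncl => B nB.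
  apply: contrapT => hn; apply: nex; exists B; split => //.
have [r r0 rB] := (nbhs_ballP x0 B).1 nB.
have hr : forall c, conv_hull (dom_op T) c -> r <= `|x0 - c|.
  move=> c Cc; rewrite leNgt; apply/negP => lt; apply: nCB; exists c; split => //.
  by apply: rB; rewrite -ball_normE.
have [l [hl [lN sep]]] := separation (N := fun x : X => `|x|)
  (C := conv_hull (dom_op T)) (p := x0) (@normr_ge0 _ _) (@ler_normD _ _)
  (fun t a t0 => (etrans (normrZ t a) (congr1 (fun u => u * `|a|) (ger0_norm t0))))
  (fun t a b t0 t1 Ca Cb => hullV_cvx t0 t1 Ca Cb) r0 hr.
have lB : forall x y, l (x - y) = l x - l y.
  move=> x y; have := hl (-1) y x; rewrite scaleN1r mulN1r addrC => ->.
  by rewrite addrC.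
have dl : is_dual l.
  split => //; apply: lip_cont => x y; rewrite -lB ler_norml lN andbT.
  by rewrite lerNl lB opprB -lB (le_trans (lN _)) // distrC.
pose la := (M - f0 x0) / r.
have la0 : 0 <= la by rewrite divr_ge0 ?subr_ge0 // ltW.
have lar : la * r = M - f0 x0 by rewrite /la mulfVK // gt_eqF.
have dk := dual_comb 1 la df0 dl.
have Tk : T x0 (fun y => 1 * f0 y + la * l y).
  apply: extend_T => // y g Tyg.
  have fb := fitz_bound opT hF df0 hM Tyg.
  have Cy : conv_hull (dom_op T) y by apply: hullV1; exists g.
  have sy := sep _ Cy.
  have [_ [_ [_ fB]]] := dual_lin df0.
  have [_ [_ [_ gB]]] := dual_lin (opT _ _ Tyg).
  rewrite !mul1r fB gB lB.
  have : la * r <= la * (l x0 - l y) by rewrite ler_wpM2l // lerBrDr addrC.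
  lra.
have Cx0 : conv_hull (dom_op T) x0 by apply: hullV1; exists (fun y => 1 * f0 y + la * l y).
by have := hr _ Cx0; rewrite subrr normr0 => /(lt_le_trans r0); rewrite ltxx.
Qed.

Lemma part2 (R : realType) (X : normedModType R) (T : operator X)
    (h : X -> (X -> R) -> \bar R) :
  maximal_monotone T -> fitzpatrick_family T h ->
  P2_dom h `<=` wstar_closure (conv_hull_dual (range_op T)).
Proof.
move=> mT hF f0 [df0 [x0 hlt]].
have [opT _] := mT.
have [M hM] := h_fin hF df0 hlt.
have Mge : f0 x0 <= M.
  by have [_ [_ [hge _]]] := hF; have := hge x0 f0 df0; rewrite hM lee_fin.
split => // n xs e e0; apply: contrapT => nex.
pose Phi (g : X -> R) : 'rV[R]_n := \row_k g (xs k).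
pose N (v : 'rV[R]_n) := \sum_k `|v 0 k|.
pose C := hullV [set Phi g | g in range_op T].
have hr : forall c, C c -> e <= N (Phi f0 - c).
  move=> _ [m [w [q [w0 [w1 [Aq ->]]]]]].
  have [gg hgg] : exists gg : 'I_m -> (X -> R), forall i, range_op T (gg i) /\ Phi (gg i) = q i.
    apply: (choice (fun i g => range_op T g /\ Phi g = q i)) => i.
    by have [g ? ?] := Aq i; exists g.
  pose G := fun y => \sum_i w i * gg i y.
  have CG : conv_hull_dual (range_op T) G.
    by exists m, w, gg; split => //; split => //; split => // i; case: (hgg i).
  have [k hk] : exists k, e <= `|G (xs k) - f0 (xs k)|.
    apply: contrapT => nk; apply: nex; exists G; split => // k.
    by rewrite ltNge; apply/negP => hk; apply: nk; exists k.
  apply: le_trans hk _; rewrite /N (bigD1 k) //= -[X in X <= _]addr0 lerD //; last first.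
    by apply: sumr_ge0 => i _; apply: normr_ge0.
  rewrite distrC !mxE summxE /G le_eqVlt; apply/orP; left; apply/eqP.
  congr (`|_ - _|); apply: eq_bigr => i _; case: (hgg i) => _ <-.
  by rewrite !mxE.
have N0 : forall a, 0 <= N a by move=> a; apply: sumr_ge0 => i _; apply: normr_ge0.
have ND : forall a b, N (a + b) <= N a + N b.
  move=> a b; rewrite /N -big_split; apply: ler_sum => k _; rewrite mxE.
  exact: ler_normD.
have NZ : forall (t : R) a, 0 <= t -> N (t *: a) = t * N a.
  move=> t a t0; rewrite /N mulr_sumr; apply: eq_bigr => k _.
  by rewrite mxE normrM ger0_norm.
have [l [hl [_ sep]]] := separation N0 ND NZ
  (fun t a b t0 t1 Ca Cb => hullV_cvx t0 t1 Ca Cb) e0 hr.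
pose w := \sum_k l (delta_mx 0 k) *: xs k.
have gw : forall g, is_dual g -> g w = l (Phi g).
  move=> g dg; rewrite /w (lin_sum _ _ dg.1).
  rewrite [Phi g]row_sum_delta (lin_sum _ _ hl).
  by apply: eq_bigr => k _; rewrite mxE mulrC.
have lB : forall x y, l (x - y) = l x - l y.
  move=> x y; have := hl (-1) y x; rewrite scaleN1r mulN1r addrC => ->.
  by rewrite addrC.
pose la := (M - f0 x0) / e.
have la0 : 0 <= la by rewrite divr_ge0 ?subr_ge0 // ltW.
have lae : la * e = M - f0 x0 by rewrite /la mulfVK // gt_eqF.
have Tk : T (x0 + la *: w) f0.
  apply: extend_T => // y g Tyg.
  have fb := fitz_bound opT hF df0 hM Tyg.
  have dg := opT _ _ Tyg.
  have Cy : C (Phi g) by apply: hullV1; exists g => //; exists y.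
  have sy := sep _ Cy.
  have [_ [fD [fZ fB]]] := dual_lin df0.
  have [_ [gD [gZ gB]]] := dual_lin dg.
  rewrite fB gB fD gD fZ gZ (gw _ df0) (gw _ dg).
  have : la * e <= la * (l (Phi f0) - l (Phi g)) by rewrite ler_wpM2l // lerBrDr addrC.
  lra.
have Cf0 : C (Phi f0) by apply: hullV1; exists f0 => //; exists (x0 + la *: w).
by have := sep _ Cf0; lra.
Qed.

Theorem lemma4p1 (R : realType) (X : completeNormedModType R)
  (T : operator X) (h : X -> (X -> R) -> \bar R) :
  maximal_monotone T -> fitzpatrick_family T h ->
  closure (P1_dom h) = closure (conv_hull (dom_op T)) /\
  wstar_closure (P2_dom h) = wstar_closure (conv_hull_dual (range_op T)).
Proof.
move=> mT hF; have [opT _] := mT.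
split.
  apply/seteqP; split.
    move=> x /(closure_subset (part1 mT hF)).
    move=> hx; exact: closed_closure hx.
  apply: closure_subset => _ [n [w [p [w0 [w1 [Ap ->]]]]]].
  have [gg hgg] : exists gg : 'I_n -> (X -> R), forall i, T (p i) (gg i).
    by apply: (choice (fun i g => T (p i) g)) => i; case: (Ap i) => g ?; exists g.
  have [dF hle] := conv_T opT hF w0 w1 hgg.
  by exists (fun y => \sum_i w i * gg i y); split => //; apply: le_lt_trans hle (ltry _).
apply/seteqP; split.
  move=> f [df hf]; split => // n xs e e0.
  have e20 : 0 < e / 2 by rewrite divr_gt0.
  have [g [[dg Pg] hg]] := hf n xs _ e20.
  have [_ hg2] := part2 mT hF (conj dg Pg).
  have [g' [Cg' hg']] := hg2 n xs _ e20.
  exists g'; split => // k.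
  have := hg k; have := hg' k.
  have := ler_normD (g' (xs k) - g (xs k)) (g (xs k) - f (xs k)).
  rewrite addrA subrK => h1 h2 h3.
  apply: le_lt_trans h1 _; rewrite (splitr e); exact: ltrD.
move=> f [df hf]; split => // n xs e e0.
have [g [[m [w [gg [w0 [w1 [Ag eg]]]]]] hg]] := hf n xs _ e0.
exists g; split => //.
have [pp hpp] : exists pp : 'I_m -> X, forall i, T (pp i) (gg i).
  by apply: (choice (fun i x => T x (gg i))) => i; case: (Ag i) => x ?; exists x.
have [dF hle] := conv_T opT hF w0 w1 hpp.
have -> : g = (fun y => \sum_i w i * gg i y) by apply: funext.
split => //; exists (\sum_i w i *: pp i); apply: le_lt_trans hle (ltry _).
Qed.
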